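(* Let $K$ be a finite field of characteristic $p$, let $d$ be an integer with $\gcd(d,|K|-1)=1$, and let $\sigma\in\mathrm{Gal}(\mathbb{Q}(\zeta_p)/\mathbb{Q})$ be such that $\sigma$ does not fix every value $W_{K,d}(a)$, $a\in K^\times$. Then $$\sum_{a\in K^\times}W_{K,d}(a)\,\sigma\big(W_{K,d}(a)\big)=0.$$
   Context: $\zeta_p$ is a primitive $p$th root of unity over $\mathbb{Q}$. $\psi_K(x)=\exp(2\pi i\,\mathrm{Tr}_{K/\mathbb{F}_p}(x)/p)$ and $W_{K,d}(a)=\sum_{x\in K}\psi_K(x^d+ax)\in\mathbb{Q}(\zeta_p)$. *)

(* Defs.v *)
From HB Require Import structures.
From mathcomp Require Import all_boot all_order all_algebra all_field.
Set Implicit Arguments. Unset Strict Implicit. Unset Printing Implicit Defensive.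
Import Order.TTheory GRing.Theory Num.Theory.
Local Open Scope ring_scope.

Definition abs_trace (K : finFieldType) (p : nat) (x : K) : K :=
  \sum_(i < logn p #|K|) x ^+ (p ^ i).

(* The residue k in {0,..,p-1} with k%:R = Tr(x) in K (Tr(x) lies in F_p). *)
Definition trace_nat (K : finFieldType) (p : nat) (x : K) : nat :=
  nat_of_ord (odflt (@ord0 p.-1)
    [pick k : 'I_p.-1.+1 | (k%:R : K) == abs_trace p x]).

(* Canonical additive character psi_K(x) = zeta^(Tr x), zeta a primitive
   p-th root of unity in the algebraic complex numbers. *)
Definition psiK (K : finFieldType) (p : nat) (zeta : algC) (x : K) : algC :=
  zeta ^+ trace_nat p x.

Definition WeilSum (K : finFieldType) (p : nat) (zeta : algC) (d : int) (a : K)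
  : algC :=
  \sum_(x : K) psiK p zeta (x ^ d + a * x).

(* Main.v *)
Require Import Defs.
From HB Require Import structures.
From mathcomp Require Import all_boot all_order all_algebra all_field.
From mathcomp Require Import zify ring.
Import Order.TTheory GRing.Theory Num.Theory.
Local Open Scope ring_scope.
Set Implicit Arguments. Unset Strict Implicit.

Section Trace.
Variables (K : finFieldType) (p : nat) (hp : p \in [pchar K]).
Local Notation Tr := (abs_trace p).
Local Notation n := (logn p #|K|).

Lemma prp : prime p. Proof. exact: pcharf_prime hp. Qed.

Lemma cardK : #|K| = (p ^ n)%N. Proof. exact: (card_pprimeChar hp). Qed.

Lemma n_gt0 : (0 < n)%N.
Proof.
move: (finNzRing_gt1 K); rewrite {1}cardK; case: (logn p #|K|) => //.
Qed.

Lemma TrD (x y : K) : Tr (x + y) = Tr x + Tr y.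
Proof.
rewrite /abs_trace -big_split; apply: eq_bigr => i _; apply: exprDn_pchar.
by rewrite pnatX (pnatE _ prp) hp.
Qed.

Lemma Tr0 : Tr (0:K) = 0.
Proof. have h := TrD 0 0; rewrite addr0 in h; apply: (addrI (Tr 0)); by rewrite -h addr0. Qed.

Lemma TrMn (x : K) k : Tr (x *+ k) = Tr x *+ k.
Proof. elim: k => [|k IH]; first by rewrite !mulr0n Tr0. by rewrite !mulrS TrD IH. Qed.

Lemma TrXp (x : K) : Tr x ^+ p = Tr x.
Proof.
rewrite /abs_trace -pFrobenius_autE rmorph_sum /=.
move: n_gt0 cardK; case: (logn p #|K|) => // m _ cK.
rewrite big_ord_recr big_ord_recl /= addrC; congr (_ + _).
  by rewrite pFrobenius_autE -exprM -expnSr -cK expf_card expn0 expr1.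
by apply: eq_bigr => i _; rewrite pFrobenius_autE -exprM -expnSr.
Qed.

Lemma natr_eq_mod (a b : nat) : (a%:R : K) = b%:R -> a = b %[mod p].
Proof.
wlog ab : a b / (a <= b)%N.
  move=> H; case: (leqP a b) => [|/ltnW] h e; first exact: H.
  by symmetry; apply: H => //; rewrite e.
move=> e; apply/eqP; by rewrite eq_sym eqn_mod_dvd // (dvdn_pcharf hp) natrB // e subrr eqxx.
Qed.

Lemma Tr_nat (x : K) : exists k, (k < p)%N /\ (k%:R : K) = Tr x.
Proof.
have p_gt0 := prime_gt0 prp.
case hin: (Tr x \in [seq (k%:R : K) | k <- iota 0 p]).
  by case/mapP: hin => k; rewrite mem_iota add0n => /andP[_ kp] ->; exists k.
exfalso.
pose P : {poly K} := 'X^p - 'X.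
have szP : size P = p.+1 by rewrite size_polyDl ?size_polyXn // size_polyN size_polyX ltnS prime_gt1 // prp.
have : (size (Tr x :: [seq (k%:R : K) | k <- iota 0 p]) < size P)%N.
  apply: max_poly_roots; first by rewrite -size_poly_eq0 szP.
    rewrite /= rootE !hornerE TrXp subrr eqxx /=.
    apply/allP => y /mapP[k _ ->]; rewrite rootE !hornerE.
    by rewrite -pFrobenius_autE rmorph_nat subrr.
  rewrite /= hin /= map_inj_in_uniq ?iota_uniq //.
  move=> i j; rewrite !mem_iota !add0n => /andP[_ ip] /andP[_ jp] /natr_eq_mod.
  by rewrite !modn_small.
by rewrite szP /= size_map size_iota ltnn.
Qed.

Lemma trace_natE (x : K) : ((trace_nat p x)%:R : K) = Tr x.
Proof.
rewrite /trace_nat; case: pickP => [k /eqP //|H]; exfalso.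
have [k [kp e]] := Tr_nat x.
have kp' : (k < p.-1.+1)%N by rewrite prednK // prime_gt0 // prp.
by have := H (Ordinal kp'); rewrite /= e eqxx.
Qed.

Lemma size_trpoly m : size (\sum_(i < m.+1) 'X^(p ^ i) : {poly K}) = (p ^ m).+1.
Proof.
elim: m => [|m IH]; first by rewrite big_ord1 size_polyXn expn0.
rewrite big_ord_recr /= addrC size_addl ?size_polyXn // IH ltnS ltn_exp2l //.
exact: prime_gt1 prp.
Qed.

Lemma exists_nontriv : exists x0 : K, Tr x0 != 0.
Proof.
case: (pickP (fun x : K => Tr x != 0)) => [x0 h|h]; first by exists x0.
exfalso.
move: n_gt0 cardK; case: (logn p #|K|) => // m _ cK.
pose P : {poly K} := \sum_(i < m.+1) 'X^(p ^ i).
have : (size (enum K) < size P)%N.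
  apply: max_poly_roots; first by rewrite -size_poly_eq0 size_trpoly.
    apply/allP => y _; rewrite rootE horner_sum.
    have := h y; rewrite /= /abs_trace cK pfactorK ?prp // => /negbFE/eqP H.
    by apply/eqP; rewrite -[RHS]H; apply: eq_bigr => i _; rewrite hornerXn.
  exact: enum_uniq.
rewrite size_trpoly -cardE cK ltnS leqNgt ltn_exp2l ?ltnSn //.
exact: prime_gt1 prp.
Qed.

End Trace.
Section Psi.
Variables (K : finFieldType) (p : nat) (hp : p \in [pchar K]).
Variables (zeta : algC) (hzeta : p.-primitive_root zeta).
Local Notation Tr := (abs_trace p).
Local Notation psi := (psiK p zeta).

Lemma psiE (x : K) k : (k%:R : K) = Tr x -> psi x = zeta ^+ k.
Proof.
move=> e; rewrite /psiK; apply/eqP; rewrite (eq_prim_root_expr hzeta); apply/eqP.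
by apply: (natr_eq_mod hp); rewrite (trace_natE hp) e.
Qed.

Lemma psiD (x y : K) : psi (x + y) = psi x * psi y.
Proof. by rewrite {2 3}/psiK -exprD; apply: psiE; rewrite natrD !(trace_natE hp) (TrD hp). Qed.

Lemma psi0 : psi (0 : K) = 1.
Proof. by rewrite (@psiE 0 0) ?expr0 // (Tr0 hp). Qed.

Lemma sum_psi : \sum_(x : K) psi x = 0.
Proof.
have [x0 hx0] := exists_nontriv hp.
have h1 : psi x0 != 1.
  rewrite /psiK -(expr0 zeta) (eq_prim_root_expr hzeta) mod0n.
  apply: contra hx0 => H; rewrite -(trace_natE hp) -(dvdn_pcharf hp).
  exact: H.
have h2 : psi x0 * \sum_(x : K) psi x = \sum_(x : K) psi x.
  rewrite [RHS](reindex_inj (addrI x0)) mulr_sumr /=.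
  by apply: eq_bigr => x _; rewrite psiD.
apply/eqP; move: h2 => /eqP; rewrite -subr_eq0 -{2}(mul1r (\sum_x psi x)) -mulrBl.
by rewrite mulf_eq0 subr_eq0 (negbTE h1).
Qed.

Lemma sum_psiM (c : K) : \sum_(x : K) psi (c * x) = if c == 0 then #|K|%:R else 0.
Proof.
case: eqP => [->|/eqP cnz].
  under eq_bigr do rewrite mul0r psi0.
  by rewrite sumr_const.
by rewrite -[RHS]sum_psi [in RHS](reindex_inj (mulfI cnz)).
Qed.

Lemma sigma_psi (sigma : {rmorphism algC -> algC}) (e : nat)
  (he : sigma zeta = zeta ^+ e) (x : K) : sigma (psi x) = psi (e%:R * x).
Proof.
rewrite {1}/psiK rmorphXn he -exprM; symmetry; apply: psiE.
by rewrite natrM (trace_natE hp) !mulr_natl (TrMn hp).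
Qed.

End Psi.
Lemma keyexp (K : finFieldType) (x : K) k : x ^+ (1 + k * #|K|.-1) = x.
Proof.
elim: k => [|k IH]; first by rewrite mul0n addn0 expr1.
rewrite mulSn addnCA exprD IH -exprSr prednK ?expf_card //.
exact: ltnW (finNzRing_gt1 K).
Qed.

Lemma expK (K : finFieldType) m : coprime m #|K|.-1 -> (0 < m)%N ->
  injective (fun x : K => x ^+ m).
Proof.
move=> hm m_gt0.
have [[u v] /= h] := coprimeP _ m_gt0 hm.
move: h; set q := #|K|.-1; set A := (u * m)%N; set B := (v * q)%N => h.
have e : (m * u = 1 + B)%N by rewrite mulnC -/A; lia.
by move=> x y /= /(congr1 (fun z => z ^+ u)); rewrite -!exprM e !keyexp.
Qed.

Lemma expzK (K : finFieldType) (d : int) : coprime `|d|%N #|K|.-1 -> (0 < `|d|)%N ->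
  injective (fun x : K => x ^ d).
Proof.
case: d => m /= hm m_gt0.
  exact: expK.
by move=> x y /= /invr_inj; apply: expK.
Qed.

Lemma expzN (K : finFieldType) (d : int) (z : K) : odd `|d|%N -> (- z) ^ d = - (z ^ d).
Proof.
rewrite expNrz; case: d => m /= om.
  change ((-1) ^+ m * z ^+ m = - z ^+ m).
  by rewrite -signr_odd om expr1 mulN1r.
change (((-1) ^+ m.+1)^-1 * (z ^+ m.+1)^-1 = - (z ^+ m.+1)^-1).
by rewrite -signr_odd /= om expr1 invrN1 mulN1r.
Qed.
Unset Implicit Arguments. Set Strict Implicit.
Theorem corollary5p7 (K : finFieldType) (p : nat) (hp : p \in [pchar K])
  (zeta : algC) (hzeta : p.-primitive_root zeta)
  (d : int) (hd : coprime `|d|%N #|K|.-1)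
  (sigma : {rmorphism algC -> algC})
  (hsigma : exists a : K, a != 0 /\ sigma (WeilSum p zeta d a) != WeilSum p zeta d a) :
  \sum_(a : K | a != 0) WeilSum p zeta d a * sigma (WeilSum p zeta d a) = 0.
Proof.
have prp := prp hp.
have p_gt1 := prime_gt1 prp.
have hz : (sigma zeta) ^+ p = 1 by rewrite -rmorphXn prim_expr_order // rmorph1.
have [e he] := prim_rootP hzeta hz.
set E : K := (e : nat)%:R.
have sigW a : sigma (WeilSum p zeta d a) = \sum_(y : K) psiK p zeta (E * (y ^ d + a * y)).
  by rewrite /WeilSum rmorph_sum; apply: eq_bigr => y _; rewrite (sigma_psi hp hzeta he).
have e_nz : (e : nat) != 0%N.
  apply/eqP => e0; move: he; rewrite e0 expr0 => /eqP; rewrite fmorph_eq1 => /eqP z1.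
  by move: (eq_prim_root_expr hzeta 1 0); rewrite expr1 expr0 z1 eqxx mod0n modn_small.
have E_nz : E != 0.
  rewrite /E -(dvdn_pcharf hp); have lt := ltn_ord e.
  have e_gt0 : (0 < e)%N by rewrite lt0n.
  by apply/negP => /(dvdn_leq e_gt0); rewrite leqNgt lt.
case: (eqVneq (E ^ d) E) => hEd.
  exfalso; case: hsigma => a [_ /eqP []]; rewrite sigW /WeilSum.
  rewrite (reindex_inj (mulfI (invr_neq0 E_nz))) /=; apply: eq_bigr => y _.
  congr (psiK p zeta _); rewrite expfzMl -expfV hEd; field.
  exact: E_nz.
have e1 : (e : nat) != 1%N.
  apply: contraNneq hEd => e1; by rewrite /E e1 exp1rz.
have p2 : p != 2%N.
  apply/eqP => p2; have : (nat_of_ord e < 2)%N by rewrite -p2.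
  move: e_nz e1; lia.
have podd : odd p by case: (even_prime prp) => // /eqP; rewrite (negbTE p2).
have p_gt2 := odd_prime_gt2 podd prp.
have qodd : odd #|K| by rewrite (cardK hp) oddX podd orbT.
have q_gt2 : (2 < #|K|)%N.
  have := n_gt0 hp; have := cardK hp; case: (logn p #|K|) => // m -> _.
  rewrite expnS; apply: (leq_trans p_gt2); rewrite leq_pmulr // expn_gt0 prime_gt0 //.
have dodd : odd `|d|%N.
  apply/negPn/negP => hev.
  have := coprime_dvdl (m := 2) _ hd; rewrite coprime2n dvdn2 hev => /(_ isT).
  by move: qodd; case: (#|K|) => //= q'; case: (odd q').
have d_gt0 : (0 < `|d|)%N by move: dodd; case: (`|d|%N).
have inj := expzK hd d_gt0.
have W0 : WeilSum p zeta d (0 : K) = 0.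
  rewrite /WeilSum (eq_bigr (fun x : K => psiK p zeta (x ^ d))); last first.
    by move=> x _; rewrite mul0r addr0.
  symmetry; rewrite -[LHS](sum_psi hp hzeta); exact: (reindex_inj inj).
suff total : \sum_(a : K) WeilSum p zeta d a * sigma (WeilSum p zeta d a) = 0.
  by move: total; rewrite (bigD1 0) //= W0 mul0r add0r.
transitivity (\sum_(a : K) \sum_(x : K) \sum_(y : K)
   psiK p zeta (x ^ d + E * y ^ d) * psiK p zeta ((x + E * y) * a)).
  apply: eq_bigr => a _; rewrite sigW /WeilSum mulr_suml; apply: eq_bigr => x _.
  rewrite mulr_sumr; apply: eq_bigr => y _; rewrite -!(psiD hp hzeta).
  congr (psiK p zeta _); ring.
rewrite exchange_big /=; under eq_bigr do rewrite exchange_big /=.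
transitivity (\sum_(x : K) \sum_(y : K) psiK p zeta (x ^ d + E * y ^ d) *
   (if x + E * y == 0 then (#|K|%:R : algC) else 0)).
  apply: eq_bigr => x _; apply: eq_bigr => y _.
  by rewrite -mulr_sumr (sum_psiM hp hzeta).
rewrite exchange_big /=.
transitivity (\sum_(y : K) psiK p zeta ((- (E * y)) ^ d + E * y ^ d) * (#|K|%:R : algC)).
  apply: eq_bigr => y _; rewrite (bigD1 (- (E * y))) //= addNr eqxx big1 ?addr0 //.
  by move=> x hx; rewrite addr_eq0 (negbTE hx) mulr0.
rewrite -mulr_suml.
transitivity ((\sum_(y : K) psiK p zeta ((E - E ^ d) * y ^ d)) * (#|K|%:R : algC)).
  congr (_ * _); apply: eq_bigr => y _; congr (psiK p zeta _).
  rewrite expzN // expfzMl; ring.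
have -> : \sum_(y : K) psiK p zeta ((E - E ^ d) * y ^ d) =
          \sum_(z : K) psiK p zeta ((E - E ^ d) * z).
  symmetry; exact: (reindex_inj inj).
by rewrite (sum_psiM hp hzeta) subr_eq0 eq_sym (negbTE hEd) mul0r.
Qed.
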